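(* Let $k\subset L$ be an FCP radicial (purely inseparable) field extension, with $p:=\mathrm{c}(k)$ and $[L:k]=p^n$. Then: (1) $\mathcal S[k,L]=\{x\in L\mid x^p\in k\}$. (2) If $k\subset L$ has FIP, then the Loewy series of $k\subset L$ is $[k,L]$ (i.e. its terms are exactly the elements of $[k,L]$), and $\pounds[k,L]=n$.
   Context: $\mathrm{c}(k)$ is the characteristic of $k$. $[k,L]$ is the lattice of intermediate fields; FCP means every chain in $[k,L]$ is finite, FIP means $[k,L]$ is finite. $K\subset K'$ is minimal if $[K,K']=\{K,K'\}$; an atom of $[k,L]$ is $K$ with $k\subset K$ minimal; the socle $\mathcal S[k,L]$ is the compositum of all atoms. Loewy series: $S_0=k$, $S_{i+1}=\mathcal S[S_i,L]$ while $S_i\neq L$; $\pounds[k,L]$ is the least $n$ with $S_n=L$. *)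

(* Defs.v *)
From HB Require Import structures.
From mathcomp Require Import all_boot all_order all_algebra all_field.
Set Implicit Arguments. Unset Strict Implicit. Unset Printing Implicit Defensive.
Import GRing.Theory.
Local Open Scope ring_scope.

Section IntermediateFields.
Variables (F : fieldType) (L : fieldExtType F).

Definition intermediate (K E : {subfield L}) : Prop := (K <= E)%VS.

Definition minimal_ext (K K' : {subfield L}) : Prop :=
  (K <= K')%VS /\ K != K' /\
  forall M : {subfield L}, (K <= M)%VS -> (M <= K')%VS -> M = K \/ M = K'.

Definition atom (K A : {subfield L}) : Prop := minimal_ext K A.

(* S is the socle S[K,L]: the compositum of all atoms of [K,L], i.e. the
   least intermediate field of [K,L] containing every atom
   (it equals K when there is no atom). *)
Definition is_socle (K S : {subfield L}) : Prop :=
  (K <= S)%VS /\ (forall A, atom K A -> (A <= S)%VS) /\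
  (forall M : {subfield L}, (K <= M)%VS -> (forall A, atom K A -> (A <= M)%VS) ->
     (S <= M)%VS).

Definition FCP (K : {subfield L}) : Prop :=
  forall C : {subfield L} -> Prop,
    (forall E, C E -> (K <= E)%VS) ->
    (forall E E', C E -> C E' -> (E <= E')%VS \/ (E' <= E)%VS) ->
    exists s : seq {subfield L}, forall E, C E -> E \in s.

Definition FIP (K : {subfield L}) : Prop :=
  exists s : seq {subfield L}, forall E : {subfield L}, (K <= E)%VS -> E \in s.

Definition loewy_series (K : {subfield L}) (S : nat -> {subfield L}) : Prop :=
  S 0%N = K /\
  (forall i, (S i :> {vspace L}) != fullv -> is_socle (S i) (S i.+1)) /\
  (forall i, (S i :> {vspace L}) = fullv -> S i.+1 = S i).

Definition loewy_length (S : nat -> {subfield L}) (n : nat) : Prop :=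
  (S n :> {vspace L}) = fullv /\ forall i, (i < n)%N -> (S i :> {vspace L}) != fullv.

End IntermediateFields.

(* Main.v *)
Require Import Defs.
From HB Require Import structures.
From mathcomp Require Import all_boot all_order all_algebra all_field.
From Stdlib Require Import Classical ClassicalEpsilon.
From mathcomp Require Import zify.
Import GRing.Theory.
Local Open Scope ring_scope.

Section Aux.
Variables (F : fieldType) (L : fieldExtType F) (p : nat).
Hypothesis pcharLp : p \in [pchar L].

Let p_pr : prime p := pcharf_prime pcharLp.
Let p_gt1 : (1 < p)%N := prime_gt1 p_pr.

Lemma frobD (x y : L) : (x + y) ^+ p = x ^+ p + y ^+ p.
Proof. exact: (rmorphD (pFrobenius_aut pcharLp) x y). Qed.

Lemma adj_deg_le (E : {subfield L}) z : z ^+ p \in E -> (adjoin_degree E z <= p)%N.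
Proof.
move=> hz.
have h : minPoly E z %| 'X^p - (z ^+ p)%:P.
  apply: minPoly_dvdp; first by rewrite polyOverXnsubC.
  by rewrite rootE !hornerE subrr.
have p0 : (0 < p)%N := prime_gt0 p_pr.
have nz : 'X^p - (z ^+ p)%:P != 0 :> {poly L}.
  by rewrite -size_poly_eq0 size_XnsubC.
by have := dvdp_leq nz h; rewrite size_minPoly size_XnsubC.
Qed.

Lemma adj_deg_p (E : {subfield L}) y : y ^+ p \in E -> y \notin E -> adjoin_degree E y = p.
Proof.
move=> hy ny.
have nsep : ~~ separable_element E y.
  by rewrite (pcharf_p_separable _ _ 0 pcharLp) expn1 (Fadjoin_idP hy).
case/separablePn_pchar: nsep => q hq [g _ hg].
have qp : q = p.
  by move: hq; rewrite (pcharf_eq pcharLp) => /eqnP.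
subst q.
have hs := size_minPoly E y.
have := size_comp_poly g 'X^p; rewrite -hg hs size_polyXn /= => hd.
have hle := @adj_deg_le E y hy.
have hgt : (0 < adjoin_degree E y)%N.
  by rewrite adjoin_degreeE divn_gt0 ?adim_gt0 // dimvS // subv_adjoin.
move: hle hgt; rewrite hd /=; case: (size g).-1 => [|[|k]] //; first by rewrite mul1n.
move=> h _; exfalso; move: h; have := prime_gt0 p_pr; nia.
Qed.


Lemma frob_space (E : {subfield L}) :
  exists V : {vspace L}, forall x, (x \in V) = (x ^+ p \in E).
Proof.
suff H : forall m (V : {vspace L}), (\dim (fullv : {vspace L}) - \dim V <= m)%N ->
    (forall v, v \in V -> v ^+ p \in E) ->
    exists W : {vspace L}, forall x, (x \in W) = (x ^+ p \in E).
  apply: (H _ (asval E) (leqnn _)) => v hv; exact: rpredX.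
elim=> [|m IH] V hm hV.
  case: (classic (exists x, x ^+ p \in E /\ x \notin V)) => [[x [hx nx]]|nex].
    have le1 : (\dim V <= \dim (V + <[x]>)%VS)%N by apply: dimvS; exact: addvSl.
    have ne : \dim V != \dim (V + <[x]>)%VS.
      apply/negP => /eqP e; have /eqP eV : V == (V + <[x]>)%VS.
        by rewrite eqEdim addvSl -e leqnn.
      by move: nx; rewrite eV (subvP (addvSr V <[x]>) x (memv_line x)).
    have le2 : (\dim (V + <[x]>)%VS <= \dim (fullv : {vspace L}))%N by apply: dimvS; exact: subvf.
    exfalso; move: hm le1 ne le2; lia.
  exists V => x; apply/idP/idP; first exact: hV.
  by move=> hx; apply/negPn/negP => nx; apply: nex; exists x.
case: (classic (exists x, x ^+ p \in E /\ x \notin V)) => [[x [hx nx]]|nex].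
  apply: (IH (V + <[x]>)%VS).
    have le1 : (\dim V <= \dim (V + <[x]>)%VS)%N by apply: dimvS; exact: addvSl.
    have ne : \dim V != \dim (V + <[x]>)%VS.
      apply/negP => /eqP e; have /eqP eV : V == (V + <[x]>)%VS.
        by rewrite eqEdim addvSl -e leqnn.
      by move: nx; rewrite eV (subvP (addvSr V <[x]>) x (memv_line x)).
    have le2 : (\dim (V + <[x]>)%VS <= \dim (fullv : {vspace L}))%N by apply: dimvS; exact: subvf.
    move: hm le1 ne le2; lia.
  move=> w /memv_addP[u hu [v /vlineP[k ->] ->]].
  by rewrite frobD exprZn rpredD ?hV // rpredZ.
exists V => x; apply/idP/idP; first exact: hV.
by move=> hx; apply/negPn/negP => nx; apply: nex; exists x.
Qed.


Lemma frob_field (E : {subfield L}) :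
  {T : {subfield L} | forall x, (x \in T) = (x ^+ p \in E)}.
Proof.
apply: constructive_indefinite_description.
have [V hV] := frob_space E.
have asp : is_aspace V.
  apply/andP; split; first by apply: has_algid1; rewrite hV expr1n mem1v.
  by apply/prodvP => u v; rewrite !hV exprMn; exact: memvM.
by exists (ASpace asp) => x; rewrite -hV.
Qed.

Lemma root_pow (E : {subfield L}) x :
  purely_inseparable_element E x -> x \notin E ->
  exists j, x ^+ (p ^ j) \notin E /\ (x ^+ (p ^ j)) ^+ p \in E.
Proof.
case/purely_inseparable_elementP_pchar => n hn hx nx.
have /p_natP[m hm] : p.-nat n by rewrite -(eq_pnat _ (pcharf_eq pcharLp)).
subst n; clear hn; elim: m hx => [|m IH] hx; first by rewrite expn0 expr1 (negbTE nx) in hx.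
case: (boolP (x ^+ (p ^ m) \in E)) => [h|h]; first exact: IH.
by exists m; split => //; rewrite -exprM -expnSr.
Qed.

Lemma sub_eqv (U V : {vspace L}) : (U <= V)%VS -> (\dim V <= \dim U)%N -> U = V.
Proof. by move=> h1 h2; apply/eqP; rewrite eqEdim h1. Qed.

Lemma sub_eqf (U V : {subfield L}) : (U <= V)%VS -> (\dim V <= \dim U)%N -> U = V.
Proof. by move=> h1 h2; apply: val_inj; exact: sub_eqv. Qed.

Lemma is_socle_frob (E T : {subfield L}) :
  purely_inseparable E fullv -> (forall x, (x \in T) = (x ^+ p \in E)) -> is_socle E T.
Proof.
move=> /purely_inseparableP pi hT.
have ET : (E <= T)%VS by apply/subvP => x hx; rewrite hT rpredX.
split; first exact: ET.
split.
  move=> A [EA [nEA hA]].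
  have [x xA xE] : exists2 x, x \in A & x \notin E.
    apply/subvPn/negP => AE; apply/negP: nEA; rewrite negbK; apply/eqP.
    by apply: val_inj; apply: subv_anti; rewrite EA AE.
  have [j [nj hj]] := @root_pow E x (pi x (memvf x)) xE.
  set y := x ^+ (p ^ j) in nj hj.
  have yA : y \in A by rewrite rpredX.
  have EyA : (<<E; y>>%AS <= A)%VS by apply/FadjoinP; rewrite EA yA.
  case: (hA <<E; y>>%AS (subv_adjoin _ _) EyA) => hE.
    by move: nj; rewrite -[y \in E]/(y \in asval E) -hE memv_adjoin.
  rewrite -hE; apply/FadjoinP; rewrite ET /= hT //.
move=> M EM hM; apply/subvP => x hx.
case: (boolP (x \in E)) => xE; first exact: (subvP EM).
have hxp : x ^+ p \in E by rewrite -hT.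
have dx : \dim <<E; x>> = (p * \dim E)%N by rewrite dim_Fadjoin adj_deg_p.
have at1 : atom E <<E; x>>%AS.
  split; first exact: subv_adjoin.
  split.
    apply/negP => /eqP e; move: xE; rewrite -[x \in E]/(x \in asval E) e.
    by rewrite memv_adjoin.
  move=> M' EM' M'x.
  have d1 := field_dimS EM'; have d2 := field_dimS M'x.
  have dE := adim_gt0 E.
  move: d1 => /dvdnP [a ha]; rewrite dx ha in d2.
  rewrite dvdn_pmul2r // in d2.
  case/primeP: p_pr => _ /(_ a d2) /orP [] /eqP ea.
    by left; apply: esym; apply: sub_eqf => //; rewrite ha ea mul1n.
  by right; apply: sub_eqf => //; rewrite dx ha ea mulnC.
by apply: (subvP (hM _ at1)); exact: memv_adjoin.
Qed.


Lemma fin_enum (sF : seq F) : (forall c, c \in sF) ->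
  exists eL : seq L, forall x, x \in eL.
Proof.
move=> hF.
suff H : forall vs : seq L, exists e : seq L, forall x, x \in <<vs>>%VS -> x \in e.
  have [e he] := H (vbasis fullv); exists e => x; apply: he.
  by rewrite (span_basis (vbasisP fullv)) memvf.
elim=> [|v vs [e he]].
  by exists [:: 0] => x; rewrite span_nil memv0 inE.
exists [seq a *: v + y | a <- sF, y <- e] => x.
rewrite span_cons => /memv_addP[u /vlineP[k ->] [w hw ->]].
by apply: allpairs_f; rewrite ?hF ?he.
Qed.

Lemma fin_perfect (sF : seq F) : (forall c, c \in sF) ->
  forall (E : {subfield L}) b, b ^+ p \in E -> b \in E.
Proof.
move=> hF E b hb; have [eL heL] := @fin_enum sF hF.
set sE := [seq x <- undup eL | x \in E].
have uE : uniq sE by rewrite filter_uniq ?undup_uniq.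
have finj : injective (fun x : L => x ^+ p) := fmorph_inj (pFrobenius_aut pcharLp).
have u2 : uniq (map (fun x : L => x ^+ p) sE) by rewrite map_inj_uniq.
have s2 : {subset map (fun x : L => x ^+ p) sE <= sE}.
  move=> z /mapP[x]; rewrite mem_filter => /andP[xE _] ->.
  by rewrite mem_filter rpredX // mem_undup heL.
have hsz : (size sE <= size (map (fun x : L => x ^+ p) sE))%N by rewrite size_map.
have [_ eqs] := uniq_min_size u2 s2 hsz.
have : b ^+ p \in sE by rewrite mem_filter hb mem_undup heL.
rewrite -eqs => /mapP[z]; rewrite mem_filter => /andP[zE _] /finj ->; exact: zE.
Qed.

Lemma pigeon (T : eqType) (s : seq T) (P : F -> Prop) (f : F -> T) :
  (forall c, P c -> f c \in s) -> (forall c d, P c -> P d -> f c = f d -> c = d) ->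
  exists sF : seq F, forall c, P c -> c \in sF.
Proof.
elim: s P => [|t s IH] P hs hinj.
  by exists [::] => c /hs.
case: (classic (exists c0, P c0 /\ f c0 = t)) => [[c0 [Pc0 fc0]]|nex].
  have h1 : forall c, P c /\ c <> c0 -> f c \in s.
    move=> c [Pc nc]; have := hs c Pc; rewrite inE => /orP[/eqP e|] //.
    by case: nc; apply: hinj => //; rewrite e fc0.
  have h2 : forall c d, P c /\ c <> c0 -> P d /\ d <> c0 -> f c = f d -> c = d.
    by move=> c d [Pc _] [Pd _]; exact: hinj.
  have [sF hsF] := IH (fun c => P c /\ c <> c0) h1 h2.
  exists (c0 :: sF) => c Pc; rewrite inE; case: (eqVneq c c0) => //= nc.
  by apply: hsF; split => //; apply/eqP.
have h1 : forall c, P c -> f c \in s.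
  move=> c Pc; have := hs c Pc; rewrite inE => /orP[/eqP e|] //.
  by case: nex; exists c.
exact: (IH P h1 hinj).
Qed.


Lemma frob_closed (E : {subfield L}) (a b : L) (c : F) :
  a ^+ p \in E -> b ^+ p \in E -> (a + c *: b) ^+ p \in E.
Proof. by move=> ha hb; rewrite frobD exprZn rpredD // rpredZ. Qed.

Lemma soc_dim (K E T : {subfield L}) :
  FIP K -> purely_inseparable K fullv -> (K <= E)%VS ->
  (E : {vspace L}) != fullv -> (forall x, (x \in T) = (x ^+ p \in E)) ->
  \dim T = (p * \dim E)%N.
Proof.
move=> [s hs] /purely_inseparableP pi KE nEf hT.
have [x _ xE] : exists2 x, x \in (fullv : {vspace L}) & x \notin E.
  apply/subvPn/negP => fE; apply/negP: nEf; rewrite negbK eqEsubv fE subvf //.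
have [j [nj hj]] := @root_pow E x (sub_inseparable KE (pi x (memvf x))) xE.
set y := x ^+ (p ^ j) in nj hj.
have ET : (E <= T)%VS by apply/subvP => z hz; rewrite hT rpredX.
have EyT : (<<E; y>> <= T)%VS by apply/FadjoinP; rewrite ET hT.
have dy : \dim <<E; y>> = (p * \dim E)%N by rewrite dim_Fadjoin adj_deg_p.
suff TEy : (T <= <<E; y>>)%VS by rewrite -dy (@subv_anti _ _ (T : {vspace L}) <<E; y>>%VS) // TEy EyT.
apply/subvP => b bT; apply/negPn/negP => nb.
have hb : b ^+ p \in E by rewrite -hT.
case: (classic (exists sF : seq F, forall c, c \in sF)) => [[sF hF]|ninf].
  by move: nj; rewrite (@fin_perfect sF hF E _ hj).
apply: ninf.
pose f (c : F) := <<E; y + c *: b>>%AS.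
suff [sF hsF] : exists sF : seq F, forall c, True -> c \in sF.
  by exists sF => c; exact: hsF.
apply: (@pigeon _ s (fun _ => True) f) => [c _|c d _ _ fcd].
  apply: hs; apply: (subv_trans KE); exact: subv_adjoin.
case: (eqVneq c d) => // ncd; exfalso.
set M := f c.
have zc : y + c *: b \in M by exact: memv_adjoin.
have zd : y + d *: b \in M by rewrite /M fcd; exact: memv_adjoin.
have bM : b \in M.
  have : (c - d) *: b \in M.
    have := rpredB zc zd; rewrite opprD addrACA subrr add0r.
    by rewrite scalerBl.
  move=> h; have := rpredZ ((c - d)^-1) h.
  by rewrite scalerA mulVf ?subr_eq0 // scale1r.
have yM : y \in M by rewrite -(addrK (c *: b) y) rpredB // rpredZ.
have Ey := dy; 
have EyM : (<<<<E; y>>%AS; b>> <= M)%VS.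
  apply/FadjoinP; split => //; apply/FadjoinP; split => //.
  exact: subv_adjoin.
have hb' : b ^+ p \in <<E; y>>%AS by apply: (subvP (subv_adjoin _ _)).
have d2 : \dim <<<<E; y>>%AS; b>> = (p * (p * \dim E))%N.
  by rewrite dim_Fadjoin adj_deg_p // -dy.
have dM : (\dim M <= p * \dim E)%N.
  rewrite /M /f dim_Fadjoin leq_mul2r adj_deg_le ?orbT //.
  by apply: frob_closed.
have := dimvS EyM; rewrite d2 => h.
have h3 := leq_trans h dM; have := adim_gt0 E; have := p_gt1.
move=> p1 d0; move: h3; rewrite leq_pmul2l ?prime_gt0 // -{2}[\dim E]mul1n.
by rewrite leq_pmul2r // leqNgt p1.
Qed.

End Aux.

Theorem proposition9p31 (F : fieldType) (L : fieldExtType F)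
  (K : {subfield L}) (p n : nat) :
  FCP K ->
  purely_inseparable K fullv ->
  p \in [pchar L] ->
  \dim_K (fullv : {vspace L}) = (p ^ n)%N ->
  (exists S : {subfield L}, is_socle K S /\ forall x : L, (x \in S) = (x ^+ p \in K))
  /\
  (FIP K ->
   exists S : nat -> {subfield L},
     loewy_series K S /\
     (forall E : {subfield L}, (K <= E)%VS <-> exists i, E = S i) /\
     loewy_length S n).
Proof.
move=> _ pi pc hdim.
have p_pr : prime p := pcharf_prime pc.
pose soc E := sval (@frob_field _ _ _ pc E).
have soc_spec : forall E x, (x \in soc E) = (x ^+ p \in E).
  by move=> E; exact: (svalP (@frob_field _ _ _ pc E)).
have Esoc : forall E : {subfield L}, (E <= soc E)%VS.
  by move=> E; apply/subvP => x hx; rewrite soc_spec rpredX.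
split.
  exists (soc K); split; last exact: soc_spec.
  exact: (@is_socle_frob _ _ _ pc K (soc K) pi (soc_spec K)).
move=> fip.
pose S := fix S i := match i with 0%N => K
  | i'.+1 => if (S i' : {vspace L}) == fullv then S i' else soc (S i') end.
have SS : forall i, S i.+1 = if (S i : {vspace L}) == fullv then S i else soc (S i) by [].
have KS : forall i, (K <= S i)%VS.
  elim=> [|i IH]; first exact: subvv.
  rewrite SS; case: ifP => // _; exact: subv_trans IH (Esoc _).
have piS : forall i, purely_inseparable (S i) fullv.
  move=> i; apply/purely_inseparableP => y _; apply: sub_inseparable (KS i) _.
  by move/purely_inseparableP: pi; apply; exact: memvf.
have dimL : \dim (fullv : {vspace L}) = (p ^ n * \dim K)%N.
  by rewrite -hdim divnK // field_dimS // subvf.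
have dK := adim_gt0 K.
have p_gt1 := prime_gt1 p_pr.
have hdimS : forall i, (i <= n)%N -> \dim (S i) = (p ^ i * \dim K)%N.
  elim=> [|i IH] hi; first by rewrite expn0 mul1n.
  have IH' := IH (ltnW hi).
  have ne : (S i : {vspace L}) != fullv.
    apply/negP => /eqP e; move: IH'; rewrite e dimL => /eqP.
    by rewrite eqn_pmul2r // eqn_exp2l // => /eqP ein; rewrite ein ltnn in hi.
  rewrite SS (negbTE ne).
  rewrite (@soc_dim _ _ _ pc K (S i) (soc (S i)) fip pi (KS i) ne (soc_spec _)).
  by rewrite IH' expnS mulnA.
have Sne : forall i, (i < n)%N -> (S i : {vspace L}) != fullv.
  move=> i hi; apply/negP => /eqP e.
  have := hdimS i (ltnW hi); rewrite e dimL => /eqP.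
  by rewrite eqn_pmul2r // eqn_exp2l // => /eqP ein; rewrite ein ltnn in hi.
have Sn : (S n : {vspace L}) = fullv.
  by apply: sub_eqv; [exact: subvf | rewrite dimL hdimS].
exists S; split.
  split; first by [].
  split.
    move=> i ne; rewrite SS (negbTE ne).
    exact: (@is_socle_frob _ _ _ pc (S i) (soc (S i)) (piS i) (soc_spec _)).
  by move=> i e; rewrite SS e eqxx.
split; last by split => //; exact: Sne.
move=> E; split; last by case=> i ->; exact: KS.
move=> KE.
have cl : forall i, (i <= n)%N -> (exists j, E = S j) \/ (S i <= E)%VS.
  elim=> [|i IH] hi; first by right.
  case: (IH (ltnW hi)) => [h|h]; first by left.
  case: (boolP ((E : {vspace L}) <= S i)%VS) => hE.
    by left; exists i; apply: val_inj; apply: subv_anti; rewrite hE h.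
  right.
  have [x xE xS] := subvPn hE.
  have pix : purely_inseparable_element (S i) x.
    by move/purely_inseparableP: (piS i); apply; exact: memvf.
  have [j [nj hj]] := @root_pow _ _ _ pc (S i) x pix xS.
  set y := x ^+ (p ^ j) in nj hj.
  have yE : y \in E by rewrite rpredX.
  have ne := Sne i hi.
  rewrite SS (negbTE ne).
  have h1 : (<<S i; y>> <= soc (S i))%VS by apply/FadjoinP; rewrite Esoc soc_spec.
  have eq1 : <<S i; y>>%VS = soc (S i).
    apply: sub_eqv => //.
    rewrite (@soc_dim _ _ _ pc K (S i) (soc (S i)) fip pi (KS i) ne (soc_spec _)).
    by rewrite dim_Fadjoin (@adj_deg_p _ _ _ pc (S i) y hj nj) .
  by rewrite -eq1; apply/FadjoinP.
case: (cl n (leqnn n)) => // h; exists n; apply: val_inj; apply: subv_anti.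
by rewrite h /= Sn subvf.
Qed.
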